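(* For every $n\geq1$, there is a surjective morphism $\phi:Z_{\mathbb{A}_{n+1}}\to Z_{\mathbb{A}_n}$ all of whose fibers are isomorphic to $\mathbb{A}^1$. For every $n\geq1$, $Z_{\mathbb{A}_n}\simeq\mathbb{A}^{n+1}$.
   Context: Over a field $\mathbb{K}$, for $n\ge1$, $Z_{\mathbb{A}_n}$ is the affine variety in variables $(\alpha,x_1,\dots,x_n,x'_1,\dots,x'_n)$ ($\alpha$ arbitrary) defined by $x_1x'_1=1+\alpha x_2$, $x_ix'_i=1+x_{i-1}x_{i+1}$ for $2\le i\le n-1$, $x_nx'_n=1+x_{n-1}$ (for $n=1$: $x_1x'_1=1+\alpha$). *)

(* Defs.v *)
From HB Require Import structures.
From mathcomp Require Import all_boot all_order all_algebra.
From mathcomp Require Import mpoly.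

Set Implicit Arguments.
Unset Strict Implicit.
Unset Printing Implicit Defensive.

Import GRing.Theory.
Local Open Scope ring_scope.

(* An affine K-variety is presented as (m, s): the closed subvariety of
   A^m cut out by the ideal generated by the finite list s of polynomials
   in K[X_0, ..., X_(m-1)]; its coordinate ring is K[X]/(s). *)

Section AffinePresented.
Variable K : fieldType.

Definition psubst (m k : nat) (f : 'I_k -> {mpoly K[m]}) (p : {mpoly K[k]})
  : {mpoly K[m]} := p \mPo [tuple f i | i < k].

Definition in_ideal (m : nat) (s : seq {mpoly K[m]}) (p : {mpoly K[m]}) : Prop :=
  exists c : 'I_(size s) -> {mpoly K[m]}, p = \sum_(i < size s) c i * s`_i.

Definition is_morph (m k : nat) (s : seq {mpoly K[m]}) (t : seq {mpoly K[k]})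
  (f : 'I_k -> {mpoly K[m]}) : Prop :=
  forall q, q \in t -> in_ideal s (psubst f q).

Definition pcomp (m k l : nat) (g : 'I_l -> {mpoly K[k]}) (f : 'I_k -> {mpoly K[m]})
  : 'I_l -> {mpoly K[m]} := fun j => psubst f (g j).

Definition idmap_p (m : nat) : 'I_m -> {mpoly K[m]} := fun i => 'X_i.

Definition equiv_mod (m k : nat) (s : seq {mpoly K[m]}) (f g : 'I_k -> {mpoly K[m]})
  : Prop := forall j, in_ideal s (f j - g j).

Definition isomorphic (m k : nat) (s : seq {mpoly K[m]}) (t : seq {mpoly K[k]})
  : Prop :=
  exists (f : 'I_k -> {mpoly K[m]}) (g : 'I_m -> {mpoly K[k]}),
    [/\ is_morph s t f, is_morph t s g,
        equiv_mod s (pcomp g f) (@idmap_p m) & equiv_mod t (pcomp f g) (@idmap_p k)].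

Definition affine_space (d : nat) : seq {mpoly K[d]} := [::].

Definition is_point (m : nat) (s : seq {mpoly K[m]}) (v : 'I_m -> K) : Prop :=
  forall q, q \in s -> q.@[v] = 0.

Definition surj_points (m k : nat) (s : seq {mpoly K[m]}) (t : seq {mpoly K[k]})
  (f : 'I_k -> {mpoly K[m]}) : Prop :=
  forall w, is_point t w ->
    exists v, is_point s v /\ forall j, (f j).@[v] = w j.

(* scheme-theoretic fibre of f : V(s) -> A^k over the K-point w *)
Definition fiber (m k : nat) (s : seq {mpoly K[m]}) (f : 'I_k -> {mpoly K[m]})
  (w : 'I_k -> K) : seq {mpoly K[m]} :=
  s ++ [seq f j - (w j)%:MP | j <- enum 'I_k].

(* Z_{A_n} in A^(2n+1), variables (alpha, x_1..x_n, x'_1..x'_n):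
   alpha = X_0, x_i = X_i (1 <= i <= n), x'_i = X_(n+i).
   With the conventions x_0 := alpha and x_(n+1) := 1 all the defining
   equations read  x_i x'_i = 1 + x_(i-1) x_(i+1)  for 1 <= i <= n. *)
Definition xv (n i : nat) : {mpoly K[n.*2.+1]} :=
  if (i <= n)%N then 'X_(inord i) else 1.
Definition xpv (n i : nat) : {mpoly K[n.*2.+1]} := 'X_(inord (n + i)).

Definition ZA (n : nat) : seq {mpoly K[n.*2.+1]} :=
  [seq xv n i * xpv n i - (1 + xv n i.-1 * xv n i.+1) | i <- iota 1 n].

End AffinePresented.

(* Main.v *)
Require Import Defs.
From HB Require Import structures.
From mathcomp Require Import all_boot all_order all_algebra.
From mathcomp Require Import mpoly.
From mathcomp Require Import ring zify.
Set Implicit Arguments. Unset Strict Implicit. Unset Printing Implicit Defensive.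
Import GRing.Theory.
Local Open Scope ring_scope.
Notation pcomp := Defs.pcomp.
Section Gen.
Variable K : fieldType.

Lemma mpoly_ind2 (m : nat) (P : {mpoly K[m]} -> Prop) :
  (forall c, P c%:MP) -> (forall i, P 'X_i) ->
  (forall p q, P p -> P q -> P (p + q)) -> (forall p q, P p -> P q -> P (p * q)) ->
  forall p, P p.
Proof.
move=> hC hX hD hM; elim/mpolyind => [|c mo p _ _ hp]; first by rewrite -mpolyC0.
apply: (hD) => //; rewrite -mul_mpolyC; apply: (hM) => //.
rewrite mpolyXE_id; apply: (big_ind P); [by rewrite -mpolyC1| exact: hM|].
move=> i _; elim: (mo i) => [|e ih]; first by rewrite expr0 -mpolyC1.
by rewrite exprS; apply: hM.
Qed.

Section Ps.
Variables (m k : nat) (f : 'I_k -> {mpoly K[m]}).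
Lemma psubstX i : psubst f 'X_i = f i.
Proof. by rewrite /psubst comp_mpolyXU -tnth_nth tnth_mktuple. Qed.
Lemma psubstC c : psubst f c%:MP = c%:MP.
Proof. by rewrite /psubst comp_mpolyC. Qed.
Lemma psubst1 : psubst f 1 = 1.
Proof. by rewrite /psubst comp_mpoly1. Qed.
Lemma psubst0 : psubst f 0 = 0.
Proof. by rewrite /psubst comp_mpoly0. Qed.
Lemma psubstD p q : psubst f (p + q) = psubst f p + psubst f q.
Proof. by rewrite /psubst comp_mpolyD. Qed.
Lemma psubstN p : psubst f (- p) = - psubst f p.
Proof. by rewrite /psubst comp_mpolyN. Qed.
Lemma psubstB p q : psubst f (p - q) = psubst f p - psubst f q.
Proof. by rewrite /psubst comp_mpolyB. Qed.
Lemma psubstM p q : psubst f (p * q) = psubst f p * psubst f q.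
Proof. by rewrite /psubst rmorphM. Qed.
End Ps.

Lemma psubst_eq m k (f g : 'I_k -> {mpoly K[m]}) p : f =1 g -> psubst f p = psubst g p.
Proof.
move=> e; elim/mpoly_ind2: p => [c|i|p q hp hq|p q hp hq].
- by rewrite !psubstC.
- by rewrite !psubstX.
- by rewrite !psubstD hp hq.
- by rewrite !psubstM hp hq.
Qed.

Lemma psubst_comp m k l (f : 'I_k -> {mpoly K[m]}) (g : 'I_l -> {mpoly K[k]}) p :
  psubst f (psubst g p) = psubst (pcomp g f) p.
Proof.
elim/mpoly_ind2: p => [c|i|p q hp hq|p q hp hq].
- by rewrite !psubstC.
- by rewrite !psubstX.
- by rewrite !psubstD hp hq.
- by rewrite !psubstM hp hq.
Qed.

Lemma psubst_id m p : psubst (@idmap_p K m) p = p.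
Proof.
elim/mpoly_ind2: p => [c|i|p q hp hq|p q hp hq].
- by rewrite !psubstC.
- by rewrite !psubstX.
- by rewrite !psubstD hp hq.
- by rewrite !psubstM hp hq.
Qed.

Section Id.
Variables (m : nat) (s : seq {mpoly K[m]}).
Lemma ideal0 : in_ideal s 0.
Proof. by exists (fun _ => 0); rewrite big1 // => i _; rewrite mul0r. Qed.
Lemma idealD p q : in_ideal s p -> in_ideal s q -> in_ideal s (p + q).
Proof.
case=> c -> [d ->]; exists (fun i => c i + d i).
by rewrite -big_split; apply: eq_bigr => i _; rewrite mulrDl.
Qed.
Lemma idealMl r p : in_ideal s p -> in_ideal s (r * p).
Proof.
case=> c ->; exists (fun i => r * c i).
by rewrite mulr_sumr; apply: eq_bigr => i _; rewrite mulrA.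
Qed.
Lemma idealMr r p : in_ideal s p -> in_ideal s (p * r).
Proof. by rewrite mulrC; apply: idealMl. Qed.
Lemma idealN p : in_ideal s p -> in_ideal s (- p).
Proof. by move=> h; rewrite -mulN1r; apply: idealMl. Qed.
Lemma idealB p q : in_ideal s p -> in_ideal s q -> in_ideal s (p - q).
Proof. by move=> hp hq; apply: idealD => //; apply: idealN. Qed.
Lemma idealE p q : p = q -> in_ideal s (p - q).
Proof. by move=> ->; rewrite subrr; apply: ideal0. Qed.
Lemma ideal_sum (I : finType) (F : I -> {mpoly K[m]}) :
  (forall i, in_ideal s (F i)) -> in_ideal s (\sum_i F i).
Proof. by move=> h; apply: big_ind => //; [apply: ideal0|apply: idealD]. Qed.
Lemma ideal_mem q : q \in s -> in_ideal s q.
Proof.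
move=> qs; have hi : (index q s < size s)%N by rewrite index_mem.
exists (fun i => if val i == index q s then 1 else 0).
rewrite (bigD1 (Ordinal hi)) //= eqxx mul1r nth_index // big1 ?addr0 //.
move=> i ne; case: eqP => [e|_]; last by rewrite mul0r.
by move: ne; rewrite (_ : i = Ordinal hi) ?eqxx //; apply: val_inj.
Qed.
End Id.

Lemma ideal_nil m (p : {mpoly K[m]}) : in_ideal [::] p -> p = 0.
Proof. by case=> c ->; rewrite big_ord0. Qed.

Lemma ideal_sub m (s u : seq {mpoly K[m]}) p :
  (forall q, q \in s -> in_ideal u q) -> in_ideal s p -> in_ideal u p.
Proof.
move=> h [c ->]; apply: ideal_sum => i; apply: idealMl; apply: h.
exact: mem_nth.
Qed.

Lemma morph_ideal m k (s : seq {mpoly K[m]}) (t : seq {mpoly K[k]}) f p :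
  is_morph s t f -> in_ideal t p -> in_ideal s (psubst f p).
Proof.
move=> hf [c ->]; rewrite /psubst raddf_sum /=; apply: ideal_sum => i.
rewrite rmorphM /=; apply: idealMl; apply: hf; exact: mem_nth.
Qed.

Lemma equiv_psubst m k (s : seq {mpoly K[m]}) (f g : 'I_k -> {mpoly K[m]}) p :
  equiv_mod s f g -> in_ideal s (psubst f p - psubst g p).
Proof.
move=> e; elim/mpoly_ind2: p => [c|i|p q hp hq|p q hp hq].
- by rewrite !psubstC; apply: idealE.
- by rewrite !psubstX; apply: e.
- rewrite !psubstD; have -> : psubst f p + psubst f q - (psubst g p + psubst g q)
    = (psubst f p - psubst g p) + (psubst f q - psubst g q) by ring.
  exact: idealD.
- rewrite !psubstM; have -> : psubst f p * psubst f q - psubst g p * psubst g q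
    = psubst f p * (psubst f q - psubst g q) + (psubst f p - psubst g p) * psubst g q by ring.
  by apply: idealD; [apply: idealMl|apply: idealMr].
Qed.

Lemma iso_trans m k l (s : seq {mpoly K[m]}) (t : seq {mpoly K[k]}) (u : seq {mpoly K[l]}) :
  isomorphic s t -> isomorphic t u -> isomorphic s u.
Proof.
case=> f1 [g1 [m1 m1' e1 e1']] [f2 [g2 [m2 m2' e2 e2']]].
exists (pcomp f2 f1), (pcomp g1 g2); split.
- by move=> q qu; rewrite /psubst -/(psubst _ _) -psubst_comp; apply: morph_ideal m1 _; apply: m2.
- by move=> q qu; rewrite -psubst_comp; apply: morph_ideal m2' _; apply: m1'.
- move=> j; change (in_ideal s (psubst (pcomp f2 f1) (psubst g2 (g1 j)) - 'X_j)).
  rewrite -psubst_comp [psubst f2 _]psubst_comp.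
  have -> : psubst f1 (psubst (pcomp g2 f2) (g1 j)) - 'X_j =
    psubst f1 (psubst (pcomp g2 f2) (g1 j) - psubst (@idmap_p K k) (g1 j))
    + (psubst f1 (g1 j) - 'X_j) by rewrite psubstB psubst_id; ring.
  by apply: idealD; [apply: morph_ideal m1 _; apply: equiv_psubst|apply: e1].
- move=> j; change (in_ideal u (psubst (pcomp g1 g2) (psubst f1 (f2 j)) - 'X_j)).
  rewrite -psubst_comp [psubst g1 _]psubst_comp.
  have -> : psubst g2 (psubst (pcomp f1 g1) (f2 j)) - 'X_j =
    psubst g2 (psubst (pcomp f1 g1) (f2 j) - psubst (@idmap_p K k) (f2 j))
    + (psubst g2 (f2 j) - 'X_j) by rewrite psubstB psubst_id; ring.
  by apply: idealD; [apply: morph_ideal m2' _; apply: equiv_psubst|apply: e2'].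
Qed.


Definition ext (A : Type) k (h : 'I_k -> A) (a : A) : 'I_k.+1 -> A :=
  fun j => match unlift ord_max j with Some i => h i | None => a end.
Lemma ext_lift A k h a i : @ext A k h a (lift ord_max i) = h i.
Proof. by rewrite /ext liftK. Qed.
Lemma ext_max A k h a : @ext A k h a ord_max = a.
Proof. by rewrite /ext unlift_none. Qed.
Definition liftX m : 'I_m -> {mpoly K[m.+1]} := fun i => 'X_(lift ord_max i).
Arguments liftX : clear implicits.
Definition lifts m (s : seq {mpoly K[m]}) := map (psubst (liftX m)) s.

Lemma psubst_liftX m k (h : 'I_k.+1 -> {mpoly K[m]}) p :
  psubst h (psubst (liftX k) p) = psubst (fun i => h (lift ord_max i)) p.
Proof. by rewrite psubst_comp; apply: psubst_eq => i; rewrite /Defs.pcomp /liftX psubstX. Qed.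

Lemma psubst_ext m k (h : 'I_k -> {mpoly K[m]}) a p :
  psubst (ext h a) (psubst (liftX k) p) = psubst h p.
Proof. by rewrite psubst_liftX; apply: psubst_eq => i; rewrite ext_lift. Qed.

Lemma lift_ideal m (s : seq {mpoly K[m]}) p :
  in_ideal s p -> in_ideal (lifts s) (psubst (liftX m) p).
Proof. by apply: morph_ideal => q qs; apply: ideal_mem; apply: map_f. Qed.

Section LiftHalf.
Variables (m k : nat) (s : seq {mpoly K[m]}) (t : seq {mpoly K[k]}).
Variables (f : 'I_k -> {mpoly K[m]}) (g : 'I_m -> {mpoly K[k]}).
Let F := ext (fun i => psubst (liftX m) (f i)) 'X_ord_max.
Let G := ext (fun i => psubst (liftX k) (g i)) 'X_ord_max.
Lemma lift_half1 : is_morph s t f -> is_morph (lifts s) (lifts t) F.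
Proof.
move=> mf q /mapP [q0 q0t ->]; rewrite psubst_ext.
rewrite (_ : psubst _ q0 = psubst (liftX m) (psubst f q0)); last by rewrite psubst_comp.
by apply: lift_ideal; apply: mf.
Qed.
Lemma lift_half2 : equiv_mod s (pcomp g f) (@idmap_p K m) ->
  equiv_mod (lifts s) (pcomp G F) (@idmap_p K m.+1).
Proof.
move=> e j; case: (unliftP ord_max j) => [i ->|->].
- rewrite /Defs.pcomp /G ext_lift psubst_ext.
  rewrite (_ : psubst _ (g i) = psubst (liftX m) (psubst f (g i))); last by rewrite psubst_comp.
  rewrite (_ : idmap_p _ (lift ord_max i) = psubst (liftX m) 'X_i); last by rewrite psubstX.
  by rewrite -psubstB; apply: lift_ideal; apply: e.
- by rewrite /Defs.pcomp /G ext_max psubstX /F ext_max; apply: idealE.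
Qed.
End LiftHalf.

Lemma iso_lift m k (s : seq {mpoly K[m]}) (t : seq {mpoly K[k]}) :
  isomorphic s t -> isomorphic (lifts s) (lifts t).
Proof.
case=> f [g [mf mg ef eg]].
exists (ext (fun i => psubst (liftX m) (f i)) 'X_ord_max).
exists (ext (fun i => psubst (liftX k) (g i)) 'X_ord_max).
split; [exact: lift_half1|exact: lift_half1|exact: lift_half2|exact: lift_half2].
Qed.

Lemma meval_psubst m k (f : 'I_k -> {mpoly K[m]}) v p :
  (psubst f p).@[v] = p.@[fun i => (f i).@[v]].
Proof.
elim/mpoly_ind2: p => [c|i|p q hp hq|p q hp hq].
- by rewrite psubstC !mevalC.
- by rewrite psubstX !mevalXU.
- by rewrite psubstD !mevalD hp hq.
- by rewrite psubstM !mevalM hp hq.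
Qed.

Lemma psubst_const m k (w : 'I_k -> K) p :
  psubst (fun i => (w i)%:MP : {mpoly K[m]}) p = (p.@[w])%:MP.
Proof.
elim/mpoly_ind2: p => [c|i|p q hp hq|p q hp hq].
- by rewrite psubstC mevalC.
- by rewrite psubstX mevalXU.
- by rewrite psubstD !mevalD hp hq mpolyCD.
- by rewrite psubstM !mevalM hp hq mpolyCM.
Qed.

Lemma ideal_eval m (s : seq {mpoly K[m]}) v p :
  in_ideal s p -> is_point s v -> p.@[v] = 0.
Proof.
case=> c -> hv; rewrite raddf_sum /= big1 // => i _.
by rewrite mevalM (hv s`_i) ?mulr0 // mem_nth.
Qed.

Lemma ideal_eval_eq m (s : seq {mpoly K[m]}) v p q :
  in_ideal s (p - q) -> is_point s v -> p.@[v] = q.@[v].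
Proof. by move=> h hv; apply/eqP; rewrite -subr_eq0 -mevalB (ideal_eval h hv). Qed.

Lemma fiber_main m k (s : seq {mpoly K[m]}) (t : seq {mpoly K[k]})
  (f : 'I_k.+1 -> {mpoly K[m]}) (g : 'I_m -> {mpoly K[k.+1]}) :
  is_morph s (lifts t) f -> is_morph (lifts t) s g ->
  equiv_mod s (pcomp g f) (@idmap_p K m) -> equiv_mod (lifts t) (pcomp f g) (@idmap_p K k.+1) ->
  [/\ is_morph s t (fun j => f (lift ord_max j)),
      surj_points s t (fun j => f (lift ord_max j)) &
      forall w, is_point t w ->
        isomorphic (fiber s (fun j => f (lift ord_max j)) w) (affine_space K 1)].
Proof.
move=> mf mg ef eg; split.
- move=> q qt; rewrite -psubst_liftX; apply: mf; exact: map_f.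
- move=> w hw; pose u := ext w 0.
  have hu : is_point (lifts t) u.
    move=> q /mapP [q0 q0t ->]; rewrite meval_psubst.
    rewrite (@meval_eq _ _ _ w); first exact: hw.
    by move=> i; rewrite /liftX mevalXU /u ext_lift.
  exists (fun i => (g i).@[u]); split.
  + move=> q qs; rewrite -meval_psubst; apply: ideal_eval hu; exact: mg.
  + move=> j; rewrite -meval_psubst.
    rewrite (ideal_eval_eq (eg (lift ord_max j)) hu) /idmap_p mevalXU.
    by rewrite /u ext_lift.
- move=> w hw.
  pose cw := ext (fun i => (w i)%:MP : {mpoly K[1]}) 'X_ord0.
  have cwm : forall p, in_ideal (lifts t) p -> psubst cw p = 0.
    move=> p hp; apply: ideal_nil; apply: morph_ideal hp.
    move=> q /mapP [q0 q0t ->]; rewrite psubst_ext psubst_const hw //.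
    by rewrite mpolyC0; apply: ideal0.
  have cwe : forall p q, in_ideal (lifts t) (p - q) -> psubst cw p = psubst cw q.
    by move=> p q /cwm; rewrite psubstB => /eqP; rewrite subr_eq0 => /eqP.
  exists (fun _ => f ord_max), (pcomp g cw); split.
  + by [].
  + move=> q; rewrite mem_cat => /orP [qs|].
      rewrite -psubst_comp cwm; first exact: ideal0.
      exact: mg.
    move=> /mapP [j _ ->]; rewrite -psubst_comp psubstB psubstC.
    rewrite psubstB psubstC (cwe (psubst g (f (lift ord_max j))) 'X_(lift ord_max j) (eg _)) psubstX /cw ext_lift subrr.
    exact: ideal0.
  + move=> j; change (in_ideal (fiber s (fun j => f (lift ord_max j)) w)
      (psubst (fun _ => f ord_max) (psubst cw (g j)) - 'X_j)).
    rewrite psubst_comp.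
    have -> : psubst (pcomp cw (fun _ => f ord_max)) (g j) - 'X_j =
      (psubst (pcomp cw (fun _ => f ord_max)) (g j) - psubst f (g j)) +
      (psubst f (g j) - 'X_j) by ring.
    apply: idealD.
      apply: equiv_psubst => i; case: (unliftP ord_max i) => [i' ->|->].
        rewrite /Defs.pcomp /cw ext_lift psubstC.
        rewrite -opprB; apply: idealN; apply: ideal_mem.
        by rewrite mem_cat; apply/orP; right; apply: map_f; rewrite mem_enum.
      by rewrite /Defs.pcomp /cw ext_max psubstX; apply: idealE.
    apply: ideal_sub (ef j) => q qs; apply: ideal_mem; by rewrite mem_cat qs.
  + move=> j; rewrite ord1.
    change (in_ideal [::] (psubst (pcomp g cw) (f ord_max) - 'X_ord0)).
    rewrite -psubst_comp (cwe (psubst g (f ord_max)) 'X_ord_max (eg _)) psubstX /cw ext_max.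
    exact: idealE.
Qed.

End Gen.
Ltac ifs := repeat (first [rewrite ifT; last by lia | rewrite ifF; last by lia]).

Section Conc.
Variable K : fieldType.

Definition E n i : {mpoly K[n.*2.+1]} :=
  xv K n i * xpv K n i - (1 + xv K n i.-1 * xv K n i.+1).

Lemma E_in n i : (1 <= i <= n)%N -> E n i \in ZA K n.
Proof. by move=> h; apply/mapP; exists i => //; rewrite mem_iota; lia. Qed.

Lemma in_ZA n q : q \in ZA K n -> exists2 i, (1 <= i <= n)%N & q = E n i.
Proof. by case/mapP => i; rewrite mem_iota => h ->; exists i => //; lia. Qed.

Lemma val_lift_inord N i : (i < N.+1)%N -> nat_of_ord (lift ord_max (inord i : 'I_N.+1)) = i.
Proof. by move=> h; rewrite lift_max inordK. Qed.

Section Step.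
Variable n : nat.
Hypothesis hn : (1 <= n)%N.

Definition tt : {mpoly K[(n.+1).*2.+1]} :=
  xpv K n.+1 1 * xpv K n.+1 2 - xv K n.+1 0 * xv K n.+1 3.

Definition fS : 'I_(n.*2.+1).+1 -> {mpoly K[(n.+1).*2.+1]} := fun j =>
  if (j <= n)%N then 'X_(inord j.+1) else if (j < n.*2.+1)%N then 'X_(inord j.+2) else tt.

Definition ly i : {mpoly K[(n.*2.+1).+1]} := psubst (@liftX K _) (xv K n i).
Definition lyp i : {mpoly K[(n.*2.+1).+1]} := psubst (@liftX K _) (xpv K n i).
Definition TT : {mpoly K[(n.*2.+1).+1]} := 'X_ord_max.

Definition gS : 'I_((n.+1).*2.+1) -> {mpoly K[(n.*2.+1).+1]} := fun j =>
  if (nat_of_ord j == 0)%N then - lyp 1 + TT * ly 0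
  else if (j <= n.+1)%N then @liftX K _ (inord j.-1)
  else if (nat_of_ord j == n.+2)%N then - ly 2 + TT * ly 1
  else @liftX K _ (inord j.-2).

Definition phi := fun j => fS (lift ord_max j).

Lemma phi_xv i : (i <= n.+1)%N -> psubst phi (xv K n i) = xv K n.+1 i.+1.
Proof.
move=> h; rewrite /xv; case: (leqP i n) => hi.
- rewrite psubstX /phi /fS val_lift_inord; last lia.
  by rewrite hi ltnS hi.
- by rewrite psubst1 ltnS leqNgt hi.
Qed.

Lemma phi_xpv i : (1 <= i <= n)%N -> psubst phi (xpv K n i) = xpv K n.+1 i.+1.
Proof.
move=> h; rewrite /xpv psubstX /phi /fS val_lift_inord; last lia.
rewrite ifF; last lia. rewrite ifT; last lia.
by congr 'X_(inord _); lia.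
Qed.

Lemma phi_E i : (1 <= i <= n)%N -> psubst phi (E n i) = E n.+1 i.+1.
Proof.
move=> h; rewrite /E psubstB psubstD psubst1 !psubstM !phi_xv ?phi_xpv //; try lia.
by rewrite prednK //; lia.
Qed.

Lemma ly_X i : (i <= n)%N -> ly i = @liftX K _ (inord i).
Proof. by move=> h; rewrite /ly /xv h psubstX. Qed.

Lemma g_xv i : (1 <= i <= n.+2)%N -> psubst gS (xv K n.+1 i) = ly i.-1.
Proof.
move=> h; rewrite /xv; case: (leqP i n.+1) => hi.
- rewrite psubstX /gS inordK; last lia.
  rewrite ifF; last lia.
  rewrite hi ly_X //; lia.
- by rewrite psubst1 /ly /xv ifF ?psubst1 //; lia.
Qed.

Lemma g_xpv i : (2 <= i <= n.+1)%N -> psubst gS (xpv K n.+1 i) = lyp i.-1.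
Proof.
move=> h; rewrite /xpv psubstX /gS inordK; last lia.
ifs.
by rewrite /lyp /xpv psubstX; congr (@liftX K _ (inord _)); lia.
Qed.

Lemma g_x0 : psubst gS (xv K n.+1 0) = - lyp 1 + TT * ly 0.
Proof. by rewrite /xv psubstX /gS inordK. Qed.

Lemma g_xp1 : psubst gS (xpv K n.+1 1) = - ly 2 + TT * ly 1.
Proof.
rewrite /xpv psubstX /gS inordK; last lia.
by ifs.
Qed.

Lemma liftE i : psubst (@liftX K _) (E n i) = ly i * lyp i - (1 + ly i.-1 * ly i.+1).
Proof. by rewrite /E psubstB psubstD psubst1 !psubstM. Qed.

Lemma g_E i : (1 <= i <= n.+1)%N ->
  psubst gS (E n.+1 i) = psubst (@liftX K _) (E n (maxn 1 i.-1)).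
Proof.
move=> h; rewrite liftE; case: (ltnP 1 i) => hi.
- rewrite /E psubstB psubstD psubst1 !psubstM !g_xv ?g_xpv; try lia.
  have -> : maxn 1 i.-1 = i.-1 by lia.
  have -> : i.+1.-1 = i.-1.+1 by lia.
  done.
- have -> : i = 1%N by lia.
  rewrite /E psubstB psubstD psubst1 !psubstM /= g_x0 g_xp1 !g_xv //=; try lia.
  ring.
Qed.

Lemma g_tt : psubst gS tt = TT + TT * psubst (@liftX K _) (E n 1).
Proof.
rewrite liftE /tt psubstB !psubstM g_x0 g_xp1 g_xpv ?g_xv //=; try lia.
ring.
Qed.

Lemma f_ly i : (i <= n.+1)%N -> psubst fS (ly i) = xv K n.+1 i.+1.
Proof. by move=> h; rewrite /ly psubst_liftX phi_xv. Qed.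
Lemma f_lyp i : (1 <= i <= n)%N -> psubst fS (lyp i) = xpv K n.+1 i.+1.
Proof. by move=> h; rewrite /lyp psubst_liftX phi_xpv. Qed.
Lemma f_TT : psubst fS TT = tt.
Proof. by rewrite /TT psubstX /fS /= ifF ?ltnn //; lia. Qed.

Lemma step_mf : is_morph (ZA K n.+1) (lifts (ZA K n)) fS.
Proof.
move=> q /mapP [q0 /in_ZA [i hi ->] ->].
rewrite psubst_liftX -/phi phi_E //; apply: ideal_mem; apply: E_in; lia.
Qed.

Lemma step_mg : is_morph (lifts (ZA K n)) (ZA K n.+1) gS.
Proof.
move=> q /in_ZA [i hi ->]; rewrite g_E //; apply: ideal_mem; apply: map_f.
apply: E_in; lia.
Qed.

Lemma step_ef : equiv_mod (ZA K n.+1) (pcomp gS fS) (@idmap_p K _).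
Proof.
have E1 : in_ideal (ZA K n.+1) (E n.+1 1) by apply: ideal_mem; apply: E_in; lia.
have E2 : in_ideal (ZA K n.+1) (E n.+1 2) by apply: ideal_mem; apply: E_in; lia.
move=> j; rewrite /Defs.pcomp /idmap_p -[j]inord_val /gS inordK //.
case: (posnP j) => [j0|jp].
- ifs; rewrite j0 psubstD psubstN psubstM f_TT f_lyp ?f_ly //; try lia.
  have -> : - xpv K n.+1 2 + tt * xv K n.+1 1 - 'X_(inord 0) =
    xpv K n.+1 2 * E n.+1 1 + xv K n.+1 0 * E n.+1 2.
    have x0 : xv K n.+1 0 = 'X_(inord 0) by [].
    rewrite -x0 /tt /E.
    change (1.-1)%N with 0%N; change (1.+1)%N with 2%N; change (2.-1)%N with 1%N; change (2.+1)%N with 3%N.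
    ring.
  by apply: idealD; apply: idealMl.
case: (leqP j n.+1) => h1.
- ifs; rewrite /liftX psubstX /fS val_lift_inord; last lia.
  ifs; rewrite prednK //; exact: idealE.
case: (eqVneq (nat_of_ord j) n.+2) => h2.
- ifs; rewrite h2 psubstD psubstN psubstM f_TT !f_ly //; try lia.
  have -> : - xv K n.+1 3 + tt * xv K n.+1 2 - 'X_(inord n.+2) =
    xpv K n.+1 1 * E n.+1 2 + xv K n.+1 3 * E n.+1 1.
    have x0 : xpv K n.+1 1 = 'X_(inord n.+2) by rewrite /xpv addn1.
    rewrite -x0 /tt /E.
    change (1.-1)%N with 0%N; change (1.+1)%N with 2%N; change (2.-1)%N with 1%N; change (2.+1)%N with 3%N.
    ring.
  by apply: idealD; apply: idealMl.
have := ltn_ord j => hj.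
ifs; rewrite /liftX psubstX /fS val_lift_inord; last lia.
ifs.
have -> : j.-2.+2 = j by lia.
exact: idealE.
Qed.

Lemma step_eg : equiv_mod (lifts (ZA K n)) (pcomp fS gS) (@idmap_p K _).
Proof.
move=> j; rewrite /Defs.pcomp /idmap_p /fS.
case: (leqP j n) => h1.
- ifs; rewrite psubstX /gS inordK; last lia.
  ifs.
  rewrite /liftX (_ : lift ord_max _ = j); first exact: idealE.
  apply: val_inj; change (nat_of_ord (lift ord_max (inord j : 'I_(n.*2.+1))) = nat_of_ord j).
  by rewrite val_lift_inord //; lia.
case: (ltnP j n.*2.+1) => h2.
- ifs; rewrite psubstX /gS inordK; last lia.
  ifs.
  rewrite /liftX (_ : lift ord_max _ = j); first exact: idealE.
  apply: val_inj; change (nat_of_ord (lift ord_max (inord j : 'I_(n.*2.+1))) = nat_of_ord j).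
  by rewrite val_lift_inord //; lia.
ifs; have -> : j = ord_max by apply: val_inj; have := ltn_ord j; rewrite /=; lia.
rewrite g_tt /TT (_ : forall a b : {mpoly K[(n.*2.+1).+1]}, a + b - a = b * 1); last by move=> a b; ring.
rewrite mulr1; apply: idealMl; apply: ideal_mem; apply: map_f; apply: E_in; lia.
Qed.

End Step.

Lemma base_iso : isomorphic (ZA K 1) (affine_space K 2).
Proof.
exists (fun j : 'I_2 => 'X_(inord j.+1) : {mpoly K[1.*2.+1]}).
exists (fun j : 'I_(1.*2.+1) => if (nat_of_ord j == 0)%N then 'X_(inord 0) * 'X_(inord 1) - 1
                      else 'X_(inord j.-1) : {mpoly K[2]}).
split.
- by [].
- move=> q /in_ZA [i hi ->]; have -> : i = 1%N by lia.
  rewrite (_ : E 1 1 = 'X_(inord 1) * 'X_(inord 2) - (1 + 'X_(inord 0) * 1) :> {mpoly K[3]}) //.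
  rewrite psubstB psubstD psubst1 !psubstM psubst1 !psubstX !inordK //=.
  have -> : forall a b : {mpoly K[2]}, (a * b - (1 + (a * b - 1) * 1)) = 0 by move=> a b; ring.
  exact: ideal0.
- move=> j; rewrite /Defs.pcomp /idmap_p.
  case: (posnP j) => [j0|jp].
  + ifs; rewrite (_ : j = inord 0); last by apply: val_inj; rewrite /= inordK.
    rewrite psubstB psubstM psubst1 !psubstX !inordK //.
    have -> : 'X_(inord 1) * 'X_(inord 2) - 1 - 'X_(inord 0) = E 1 1 :> {mpoly K[3]}.
      by rewrite /E /xv /xpv /=; ring.
    by apply: ideal_mem; apply: E_in.
  + ifs; rewrite psubstX inordK.
    2: by have := ltn_ord j; lia.
    by rewrite prednK // inord_val; apply: idealE.
- move=> j; rewrite /Defs.pcomp /idmap_p psubstX inordK; last (have := ltn_ord j; lia).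
  by rewrite /= inord_val; apply: idealE.
Qed.

End Conc.

Unset Implicit Arguments.

Theorem mainTheorem10 (K : fieldType) :
  (forall n : nat, (1 <= n)%N ->
     exists phi : 'I_(n.*2.+1) -> {mpoly K[(n.+1).*2.+1]},
       [/\ is_morph (ZA K n.+1) (ZA K n) phi,
           surj_points (ZA K n.+1) (ZA K n) phi &
           forall w : 'I_(n.*2.+1) -> K, is_point (ZA K n) w ->
             isomorphic (fiber (ZA K n.+1) phi w) (affine_space K 1)])
  /\
  (forall n : nat, (1 <= n)%N -> isomorphic (ZA K n) (affine_space K n.+1)).
Proof.
split.
- move=> n hn.
  have mf := @step_mf K n hn.
  have mg := @step_mg K n hn.
  have ef := @step_ef K n hn.
  have eg := @step_eg K n hn.
  have [h1 h2 h3] := fiber_main mf mg ef eg.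
  by exists (fun j => @fS K n (lift ord_max j)).
- elim=> [//|n ih] hn.
  case: (posnP n) => [->|np]; first exact: base_iso.
  apply: (iso_trans _ (iso_lift (ih np))).
  exists (@fS K n), (@gS K n); split.
  + exact: step_mf.
  + exact: step_mg.
  + exact: step_ef.
  + exact: step_eg.
Qed.
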